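(* Let $\mathcal{R}=(K,\varphi)$ be a rational set of regular languages, with $K\subseteq\Delta^+$ regular and $\varphi:\Delta\to2^{\Sigma^*}$ a regular language substitution such that $\varepsilon\in\varphi(\delta)$ for all $\delta\in\Delta$. Then the set $S(\mathcal{R})=\bigcup_{L\in\mathcal{R}}S(L)$ is finite.
   Context: A regular language substitution is a map $\varphi:\Delta\to2^{\Sigma^*}$ ($\Delta,\Sigma$ alphabets) with each $\varphi(\delta)$ regular, extended to words by $\varphi(\delta\cdot w)=\varphi(\delta)\cdot\varphi(w)$. $(K,\varphi)$ denotes the set $\{\varphi(w)\mid w\in K\}$; such sets with $K\subseteq\Delta^+$ regular are called rational sets of regular languages. For $L\subseteq\Sigma^*$, $S(L)=\{w\in L\setminus\{\varepsilon\}\mid \text{no } w'\in L\setminus\{\varepsilon\} \text{ has } |w'|<|w|\}$. *)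

(* Defs.v *)
From mathcomp Require Import all_boot.
Set Implicit Arguments. Unset Strict Implicit. Unset Printing Implicit Defensive.

Definition lang (A : Type) := seq A -> Prop.

Section Lang.
Variable A : Type.

Definition eps_lang : lang A := fun w => w = [::].

Definition conc (L1 L2 : lang A) : lang A :=
  fun w => exists u v, w = u ++ v /\ L1 u /\ L2 v.

Inductive star (L : lang A) : lang A :=
| star_nil : star L [::]
| star_app u v : L u -> star L v -> star L (u ++ v).

Inductive regex :=
| RVoid | REps | RAtom of A | RAlt of regex & regex
| RCat of regex & regex | RStar of regex.

Fixpoint lang_of (r : regex) : lang A :=
  match r with
  | RVoid => fun _ => False
  | REps => eps_lang
  | RAtom a => fun w => w = [:: a]
  | RAlt r1 r2 => fun w => lang_of r1 w \/ lang_of r2 w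
  | RCat r1 r2 => conc (lang_of r1) (lang_of r2)
  | RStar r1 => star (lang_of r1)
  end.

Definition regular (L : lang A) : Prop :=
  exists r : regex, forall w, L w <-> lang_of r w.

Definition Smin (L : lang A) : lang A :=
  fun w => L w /\ w <> [::] /\
    forall w', L w' -> w' <> [::] -> ~ (size w' < size w)%N.
End Lang.

Definition subst_word (D S : Type) (phi : D -> lang S) (w : seq D) : lang S :=
  foldr (fun d L => conc (phi d) L) (@eps_lang S) w.

Definition finite_lang (A : eqType) (L : lang A) : Prop :=
  exists s : seq (seq A), forall w, L w -> w \in s.

(* Main.v *)
Require Import Defs.
From Stdlib Require Import Classical.
From mathcomp Require Import all_boot.

Section Aux.
Variables (D S : finType) (phi : D -> lang S).
Hypothesis Heps : forall d, phi d [::].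

Lemma subst_nil x : subst_word phi x [::].
Proof. elim: x => [|d x IH] /=; first by []. by exists [::], [::]. Qed.

Lemma subst_in x d u : d \in x -> phi d u -> subst_word phi x u.
Proof.
elim: x => [|d' x IH] //=; rewrite in_cons => /orP [/eqP <-|Hin] Hu.
  exists u, [::]; split; [by rewrite cats0|split=> //]; exact: subst_nil.
exists [::], u; split=> //; split; [exact: Heps| exact: IH].
Qed.

Lemma subst_ne x w : subst_word phi x w -> w <> [::] ->
  exists d, d \in x /\ exists u, phi d u /\ u <> [::].
Proof.
elim: x w => [|d x IH] w /=; first by move=> ->.
move=> [u [v [-> [Hu Hv]]]] Hne.
case: u Hu Hne => [|a u] Hu Hne.
  have [d' [Hd' H]] := IH v Hv Hne.
  by exists d'; rewrite in_cons Hd' orbT.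
by exists d; rewrite in_cons eqxx; split=> //; exists (a :: u).
Qed.

Lemma bound_list (l : seq D) : exists B, forall d, d \in l ->
  forall u, phi d u -> u <> [::] -> exists v, phi d v /\ v <> [::] /\ size v <= B.
Proof.
elim: l => [|d l [B IH]]; first by exists 0.
case: (classic (exists v, phi d v /\ v <> [::])) => [[v [Hv Hne]]|Hn].
  exists (maxn B (size v)) => d'; rewrite in_cons => /orP [/eqP ->|Hin] u Hu Hune.
    by exists v; split=> //; split=> //; rewrite leq_maxr.
  have [v' [H1 [H2 H3]]] := IH d' Hin u Hu Hune.
  by exists v'; split=> //; split=> //; rewrite (leq_trans H3) // leq_maxl.
exists B => d'; rewrite in_cons => /orP [/eqP ->|Hin] u Hu Hune.
  by exfalso; apply: Hn; exists u.
exact: IH Hin u Hu Hune.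
Qed.

Lemma words_bounded (B : nat) : exists s : seq (seq S), forall w, size w <= B -> w \in s.
Proof.
elim: B => [|B [s IH]].
  by exists [:: [::]] => w; case: w.
exists ([::] :: [seq a :: w | a <- enum S, w <- s]) => w.
case: w => [|a w] //= Hs.
rewrite inE; apply/orP; right.
apply/allpairsP; exists (a, w) => /=; split=> //; first by rewrite mem_enum.
exact: IH.
Qed.
End Aux.

Theorem corollary1 (D S : finType) (K : lang D) (phi : D -> lang S) :
  regular K ->
  (forall w, K w -> w <> [::]) ->
  (forall d, regular (phi d)) ->
  (forall d, phi d [::]) ->
  finite_lang (fun w : seq S => exists x, K x /\ Smin (subst_word phi x) w).
Proof.
move=> _ _ _ Heps.
have [B HB] := @bound_list D S phi (enum D).
have [s Hs] := @words_bounded S B.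
exists s => w [x [_ [Hw [Hne Hmin]]]].
apply: Hs.
have [d [Hd [u [Hu Hune]]]] := @subst_ne D S phi x w Hw Hne.
have [v [Hv [Hvne Hvs]]] := HB d (mem_enum _ d) u Hu Hune.
have Hx := @subst_in D S phi Heps x d v Hd Hv.
have := Hmin v Hx Hvne.
rewrite ltnNge => /negP; rewrite negbK => Hle.
exact: leq_trans Hle Hvs.
Qed.
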